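(* Let $\varphi$ be any first-order formula in negation-normal form. Then $\varphi^N \rightarrow \varphi^{\mathit{awk}}$ is provable in minimal logic. Consequently, for formulas $\varphi$ in negation-normal form in the language of arithmetic, Peano arithmetic $\mathsf{PA}$ proves $\varphi$ if and only if $\mathsf{HA'}$ proves $\varphi^{\mathit{awk}}$.
   Context: Logical symbols are $\forall,\exists,\land,\lor,\rightarrow,\bot$, with $\lnot\varphi$ defined as $\varphi\rightarrow\bot$. Minimal logic is intuitionistic logic without ex falso (from $\bot$ infer anything). A formula is in negation-normal form if it is built from atomic and negated atomic formulas using $\land,\lor,\forall,\exists$. For such $\varphi$, the classical negation $\sim\varphi$ is obtained from $\varphi$ by exchanging $\land$ with $\lor$, $\forall$ with $\exists$, and each atomic formula with its negation (so $\sim\sim\varphi$ is $\varphi$). The awkward translation is $\varphi^{\mathit{awk}} := \lnot(\sim\varphi)$. The Gödel–Gentzen translation $\varphi^N$ is defined by: $\bot^N=\bot$; $\theta^N=\lnot\lnot\theta$ for atomic $\theta$; $(\varphi\land\psi)^N=\varphi^N\land\psi^N$; $(\varphi\lor\psi)^N=\lnot(\lnot\varphi^N\land\lnot\psi^N)$; $(\varphi\rightarrow\psi)^N=\varphi^N\rightarrow\psi^N$; $(\forall x\varphi)^N=\forall x\varphi^N$; $(\exists x\varphi)^N=\lnot\forall x\lnot\varphi^N$. $\mathsf{PA}$ is classical first-order arithmetic; $\mathsf{HA'}$ denotes Heyting arithmetic formulated over minimal logic (the language containing symbols for the primitive recursive functions, so that every negated atomic formula has an atomic equivalent). *)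

(* Defs.v *)
From Stdlib Require Import List.
From Stdlib Require Vector Fin.
Import ListNotations.

Set Implicit Arguments.

Record signature : Type := Sig {
  syms : Type;
  ar_syms : syms -> nat;
  preds : Type;
  ar_preds : preds -> nat
}.

Section FOL.
Context {S : signature}.

Inductive term : Type :=
| var : nat -> term
| func : forall f : syms S, Vector.t term (ar_syms S f) -> term.

Inductive form : Type :=
| fal : form
| atom : forall P : preds S, Vector.t term (ar_preds S P) -> form
| conj : form -> form -> form
| disj : form -> form -> form
| impl : form -> form -> form
| all : form -> form
| ex : form -> form.

Definition neg (A : form) : form := impl A fal.

Definition scons {X : Type} (x : X) (f : nat -> X) (n : nat) : X :=
  match n with 0 => x | Datatypes.S k => f k end.

Fixpoint subst_term (s : nat -> term) (t : term) : term :=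
  match t with
  | var n => s n
  | func f v => func f (Vector.map (subst_term s) v)
  end.

Definition shift : nat -> term := fun n => var (Datatypes.S n).

Definition up (s : nat -> term) : nat -> term :=
  scons (var 0) (fun n => subst_term shift (s n)).

Fixpoint subst_form (s : nat -> term) (A : form) : form :=
  match A with
  | fal => fal
  | atom P v => atom P (Vector.map (subst_term s) v)
  | conj A B => conj (subst_form s A) (subst_form s B)
  | disj A B => disj (subst_form s A) (subst_form s B)
  | impl A B => impl (subst_form s A) (subst_form s B)
  | all A => all (subst_form (up s) A)
  | ex A => ex (subst_form (up s) A)
  end.

Definition inst (t : term) (A : form) : form := subst_form (scons t var) A.

Inductive prv (c : bool) : list form -> form -> Prop :=
| Ctx G A : In A G -> prv c G A
| II G A B : prv c (A :: G) B -> prv c G (impl A B)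
| IE G A B : prv c G (impl A B) -> prv c G A -> prv c G B
| CI G A B : prv c G A -> prv c G B -> prv c G (conj A B)
| CE1 G A B : prv c G (conj A B) -> prv c G A
| CE2 G A B : prv c G (conj A B) -> prv c G B
| DI1 G A B : prv c G A -> prv c G (disj A B)
| DI2 G A B : prv c G B -> prv c G (disj A B)
| DE G A B C : prv c G (disj A B) -> prv c (A :: G) C -> prv c (B :: G) C ->
               prv c G C
| AllI G A : prv c (List.map (subst_form shift) G) A -> prv c G (all A)
| AllE G t A : prv c G (all A) -> prv c G (inst t A)
| ExI G t A : prv c G (inst t A) -> prv c G (ex A)
| ExE G A B : prv c G (ex A) ->
              prv c (A :: List.map (subst_form shift) G) (subst_form shift B) ->
              prv c G B
| DN G A : c = true -> prv c G (neg (neg A)) -> prv c G A.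

Definition tprv (c : bool) (T : form -> Prop) (A : form) : Prop :=
  exists G, (forall B, In B G -> T B) /\ prv c G A.

Definition minimal_prv (A : form) : Prop := prv false [] A.

Inductive nnf : form -> Prop :=
| nnf_atom P v : nnf (atom P v)
| nnf_natom P v : nnf (neg (atom P v))
| nnf_conj A B : nnf A -> nnf B -> nnf (conj A B)
| nnf_disj A B : nnf A -> nnf B -> nnf (disj A B)
| nnf_all A : nnf A -> nnf (all A)
| nnf_ex A : nnf A -> nnf (ex A).

(* classical negation ~phi for phi in NNF (its value on formulas that are
   not in NNF is irrelevant: it is only ever used on NNF formulas) *)
Fixpoint cneg (A : form) : form :=
  match A with
  | atom P v => neg (atom P v)
  | impl (atom P v) fal => atom P v
  | conj A B => disj (cneg A) (cneg B)
  | disj A B => conj (cneg A) (cneg B)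
  | all A => ex (cneg A)
  | ex A => all (cneg A)
  | B => B
  end.

Definition awk (A : form) : form := neg (cneg A).

Fixpoint gg (A : form) : form :=
  match A with
  | fal => fal
  | atom P v => neg (neg (atom P v))
  | conj A B => conj (gg A) (gg B)
  | disj A B => neg (conj (neg (gg A)) (neg (gg B)))
  | impl A B => impl (gg A) (gg B)
  | all A => all (gg A)
  | ex A => neg (all (neg (gg A)))
  end.

End FOL.

Arguments term : clear implicits.
Arguments form : clear implicits.

Inductive PR : nat -> Type :=
| PRzero : PR 0
| PRsucc : PR 1
| PRproj n : Fin.t n -> PR n
| PRcomp k n : PR k -> (Fin.t k -> PR n) -> PR n  (* f (g_1 x, ..., g_k x) *)
| PRrec n : PR n -> PR (Datatypes.S (Datatypes.S n)) -> PR (Datatypes.S n).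
  (* R(0,x) = g(x),  R(y+1,x) = h(y, R(y,x), x) *)

Definition arith_sig : signature :=
  {| syms := { n : nat & PR n };
     ar_syms := fun f => projT1 f;
     preds := unit;
     ar_preds := fun _ => 2 |}.

Definition aterm := term arith_sig.
Definition aform := form arith_sig.

Definition aeq (t s : aterm) : aform :=
  @atom arith_sig tt (Vector.cons _ t _ (Vector.cons _ s _ (Vector.nil _))).

Definition app {n : nat} (f : PR n) (v : Vector.t aterm n) : aterm :=
  @func arith_sig (existT _ n f) v.

Definition zero : aterm := app PRzero (Vector.nil _).
Definition succ (t : aterm) : aterm := app PRsucc (Vector.cons _ t _ (Vector.nil _)).

Fixpoint vars_from (k n : nat) : Vector.t aterm n :=
  match n with
  | 0 => Vector.nil _
  | Datatypes.S m => Vector.cons _ (@var arith_sig k) _ (vars_from (Datatypes.S k) m)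
  end.

Fixpoint vec_of_fun {X : Type} (k : nat) : (Fin.t k -> X) -> Vector.t X k :=
  match k with
  | 0 => fun _ => Vector.nil _
  | Datatypes.S m => fun g => Vector.cons _ (g Fin.F1) _ (@vec_of_fun X m (fun i => g (Fin.FS i)))
  end.

Inductive pr_eqn : aform -> Prop :=
| eqn_proj n (i : Fin.t n) :
    pr_eqn (aeq (app (PRproj i) (vars_from 0 n)) (@var arith_sig (proj1_sig (Fin.to_nat i))))
| eqn_comp k n (f : PR k) (g : Fin.t k -> PR n) :
    pr_eqn (aeq (app (PRcomp f g) (vars_from 0 n))
                (app f (@vec_of_fun aterm k (fun i => app (g i) (vars_from 0 n)))))
| eqn_rec0 n (g : PR n) (h : PR (Datatypes.S (Datatypes.S n))) :
    pr_eqn (aeq (app (PRrec g h) (Vector.cons _ zero _ (vars_from 0 n)))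
                (app g (vars_from 0 n)))
| eqn_recS n (g : PR n) (h : PR (Datatypes.S (Datatypes.S n))) :
    pr_eqn (aeq (app (PRrec g h) (Vector.cons _ (succ (@var arith_sig 0)) _ (vars_from 1 n)))
                (app h (Vector.cons _ (@var arith_sig 0) _
                        (Vector.cons _ (app (PRrec g h)
                                          (Vector.cons _ (@var arith_sig 0) _ (vars_from 1 n))) _
                                     (vars_from 1 n))))).

(* substitutions used to state the equality (Leibniz) schema:
   A(x) with x := var 0 resp. var 1, other free variables moved past 0,1 *)
Definition sub_at (k : nat) : nat -> aterm :=
  scons (@var arith_sig k) (fun n => @var arith_sig (Datatypes.S (Datatypes.S n))).

(* the (open) axioms of arithmetic; free variables are read universally,
   realised by closing the axiom set under substitution below *)
Inductive arith_ax : aform -> Prop :=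
| ax_refl : arith_ax (aeq (@var arith_sig 0) (@var arith_sig 0))
| ax_leibniz (A : aform) :
    arith_ax (impl (aeq (@var arith_sig 0) (@var arith_sig 1))
                   (impl (subst_form (sub_at 0) A) (subst_form (sub_at 1) A)))
| ax_succ_ne_zero : arith_ax (neg (aeq (succ (@var arith_sig 0)) zero))
| ax_succ_inj :
    arith_ax (impl (aeq (succ (@var arith_sig 0)) (succ (@var arith_sig 1)))
                   (aeq (@var arith_sig 0) (@var arith_sig 1)))
| ax_pr A : pr_eqn A -> arith_ax A
| ax_ind (A : aform) :
    arith_ax (impl (inst zero A)
               (impl (all (impl A (subst_form (scons (succ (@var arith_sig 0)) shift) A)))
                     (all A))).

Definition arith_axioms (A : aform) : Prop :=
  exists B s, arith_ax B /\ A = subst_form s B.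

Definition PA_prv (A : aform) : Prop := tprv true arith_axioms A.
Definition HA'_prv (A : aform) : Prop := tprv false arith_axioms A.

(* Main.v *)
Require Import Defs.
From Stdlib Require Import List.
Import ListNotations.

Section Subst.
Context {S : signature}.

Fixpoint term_ind' (P : term S -> Prop) (Hv : forall n, P (var n))
  (Hf : forall f v, Vector.Forall P v -> P (func f v)) (t : term S) : P t :=
  match t with
  | var n => Hv n
  | func f v => Hf f v ((fix aux n (w : Vector.t (term S) n) : Vector.Forall P w :=
       match w with
       | Vector.nil _ => Vector.Forall_nil P
       | Vector.cons _ x _ w' => Vector.Forall_cons P x w' (term_ind' P Hv Hf x) (aux _ w')
       end) _ v)
  end.

Lemma map_ext_Forall {A B} (f g : A -> B) n (v : Vector.t A n) :
  Vector.Forall (fun x => f x = g x) v -> Vector.map f v = Vector.map g v.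
Proof. induction 1; simpl; congruence. Qed.

Lemma map_map' {A B C} (f : A -> B) (g : B -> C) n (v : Vector.t A n) :
  Vector.map g (Vector.map f v) = Vector.map (fun x => g (f x)) v.
Proof. induction v; simpl; congruence. Qed.

Lemma map_id' {A} n (v : Vector.t A n) : Vector.map (fun x => x) v = v.
Proof. induction v; simpl; congruence. Qed.

Lemma Forall_impl' {A} (P Q : A -> Prop) n (v : Vector.t A n) :
  (forall x, P x -> Q x) -> Vector.Forall P v -> Vector.Forall Q v.
Proof. intros H; induction 1; constructor; auto. Qed.

Lemma subst_term_ext (s t : nat -> term S) u :
  (forall n, s n = t n) -> subst_term s u = subst_term t u.
Proof.
  intros H; induction u using term_ind'; simpl; auto.
  f_equal. apply map_ext_Forall. exact H0.
Qed.

Lemma subst_term_comp (s t : nat -> term S) u :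
  subst_term s (subst_term t u) = subst_term (fun n => subst_term s (t n)) u.
Proof.
  induction u using term_ind'; simpl; auto.
  f_equal. rewrite map_map'. apply map_ext_Forall. exact H.
Qed.

Lemma subst_term_id (u : term S) : subst_term var u = u.
Proof.
  induction u using term_ind'; simpl; auto.
  f_equal. rewrite <- (map_id' _ v) at 2. apply map_ext_Forall. exact H.
Qed.

Lemma subst_form_ext (A : form S) : forall (s t : nat -> term S),
  (forall n, s n = t n) -> subst_form s A = subst_form t A.
Proof.
  induction A as [|P w| | | | |]; intros s t H; simpl; f_equal; auto.
  - apply map_ext_Forall. clear -H. induction w; constructor; auto.
    apply subst_term_ext; auto.
  - apply IHA. intros [|n]; simpl; auto. rewrite H; auto.
  - apply IHA. intros [|n]; simpl; auto. rewrite H; auto.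
Qed.

Lemma subst_form_comp (A : form S) : forall (s t : nat -> term S),
  subst_form s (subst_form t A) = subst_form (fun n => subst_term s (t n)) A.
Proof.
  induction A as [|P w| | | | |]; intros s t; simpl; f_equal; auto.
  - rewrite map_map'. apply map_ext_Forall. clear. induction w; constructor; auto.
    apply subst_term_comp.
  - rewrite IHA. apply subst_form_ext. intros [|n]; simpl; auto.
    rewrite !subst_term_comp. apply subst_term_ext. intros k. reflexivity.
  - rewrite IHA. apply subst_form_ext. intros [|n]; simpl; auto.
    rewrite !subst_term_comp. apply subst_term_ext. intros k. reflexivity.
Qed.

Lemma subst_form_id (A : form S) : forall s, (forall n, s n = var n) -> subst_form s A = A.
Proof.
  induction A as [|P w| | | | |]; intros s H; simpl; f_equal; auto.
  - rewrite <- (map_id' _ w) at 2. apply map_ext_Forall. clear -H. induction w; constructor; auto.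
    rewrite (subst_term_ext s var); auto. apply subst_term_id.
  - apply IHA. intros [|n]; simpl; auto. rewrite H; reflexivity.
  - apply IHA. intros [|n]; simpl; auto. rewrite H; reflexivity.
Qed.

Lemma inst_up_shift (A : form S) : inst (var 0) (subst_form (up shift) A) = A.
Proof.
  unfold inst. rewrite subst_form_comp. apply subst_form_id.
  intros [|n]; reflexivity.
Qed.

End Subst.
Section Logic.
Context {S : signature}.
Implicit Types (A B C : form S) (G : list (form S)).

Lemma weak c G A : prv c G A -> forall G', incl G G' -> prv c G' A.
Proof.
  induction 1; intros G' Hi.
  - apply Ctx; auto.
  - apply II. apply IHprv. intros x [->|Hx]; [left|right]; auto.
  - eapply IE; eauto.
  - apply CI; auto.
  - eapply CE1; eauto.
  - eapply CE2; eauto.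
  - apply DI1; auto.
  - apply DI2; auto.
  - eapply DE; [eauto| apply IHprv2 | apply IHprv3];
    intros x [->|Hx]; [left|right| left|right]; auto.
  - apply AllI. apply IHprv. apply incl_map. auto.
  - apply AllE; auto.
  - eapply ExI; eauto.
  - eapply ExE; [eauto| apply IHprv2]. intros x [->|Hx]; [left|right]; auto.
    eapply incl_map; eauto.
  - apply DN; auto.
Qed.

Lemma weak1 c G A B : prv c G A -> prv c (B :: G) A.
Proof. intros H; eapply weak; eauto. intros x Hx; right; auto. Qed.

Lemma ctx0 c G A : prv c (A :: G) A.
Proof. apply Ctx; left; auto. Qed.
Lemma ctx1 c G A B : prv c (B :: A :: G) A.
Proof. apply Ctx; right; left; auto. Qed.
Lemma ctx2 c G A B D : prv c (D :: B :: A :: G) A.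
Proof. apply Ctx; right; right; left; auto. Qed.

Lemma allE0 c G X : prv c G (all (subst_form (up shift) X)) -> prv c G X.
Proof. intros H. rewrite <- (inst_up_shift X). apply AllE. exact H. Qed.
Lemma exI0 c G X : prv c G X -> prv c G (ex (subst_form (up shift) X)).
Proof. intros H. apply ExI with (t := var 0). rewrite inst_up_shift. exact H. Qed.

Lemma gg_subst A : forall s, gg (subst_form s A) = subst_form s (gg A).
Proof. induction A; intros s; simpl; try rewrite IHA; try rewrite IHA1; try rewrite IHA2; reflexivity. Qed.

Lemma part1 A : nnf A -> forall G, prv false G (impl (gg A) (neg (cneg A))).
Proof.
  induction 1; intros G; simpl.
  - apply II. exact (ctx0 _ _ _).
  - apply II. apply II. eapply IE; [apply ctx1|]. apply II.
    eapply IE; [apply ctx0| apply ctx1].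
  - apply II. apply II. eapply DE; [apply ctx0| |].
    + eapply IE; [eapply IE; [apply IHnnf1| eapply CE1; apply ctx2] | apply ctx0].
    + eapply IE; [eapply IE; [apply IHnnf2| eapply CE2; apply ctx2] | apply ctx0].
  - apply II. apply II. eapply IE; [apply ctx1|]. apply CI.
    + apply II. eapply IE; [eapply IE; [apply IHnnf1| apply ctx0]| eapply CE1; apply ctx1].
    + apply II. eapply IE; [eapply IE; [apply IHnnf2| apply ctx0]| eapply CE2; apply ctx1].
  - apply II. apply II. eapply ExE with (B := fal); [apply ctx0|]. simpl.
    eapply IE; [eapply IE; [apply IHnnf|] | apply ctx0].
    apply allE0.
    apply Ctx. right. right. left. reflexivity.
  - apply II. apply II. eapply IE; [apply ctx1|]. apply AllI. simpl. apply II.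
    eapply IE; [eapply IE; [apply IHnnf| apply ctx0]|].
    apply allE0. apply ctx1.
Qed.

Lemma contra {A C} : (forall G, prv true G (impl (neg A) C)) -> forall G, prv true G (impl (neg C) A).
Proof.
  intros H G. apply II. apply DN; auto. apply II. eapply IE; [apply ctx1|].
  eapply IE; [apply H| apply ctx0].
Qed.

Lemma cl1 A : nnf A -> forall G, prv true G (impl (neg A) (cneg A)).
Proof.
  induction 1; intros G; simpl.
  - apply II. apply ctx0.
  - apply II. apply DN; auto. apply ctx0.
  - apply II. apply DN; auto. apply II. eapply IE; [apply ctx1|]. apply CI.
    + eapply IE; [apply (contra IHnnf1)|]. apply II. eapply IE; [apply ctx1|]. apply DI1, ctx0.
    + eapply IE; [apply (contra IHnnf2)|]. apply II. eapply IE; [apply ctx1|]. apply DI2, ctx0.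
  - apply II. apply CI.
    + eapply IE; [apply IHnnf1|]. apply II. eapply IE; [apply ctx1|]. apply DI1, ctx0.
    + eapply IE; [apply IHnnf2|]. apply II. eapply IE; [apply ctx1|]. apply DI2, ctx0.
  - apply II. apply DN; auto. apply II. eapply IE; [apply ctx1|]. apply AllI. simpl.
    eapply IE; [apply (contra IHnnf)|]. apply II. eapply IE; [apply ctx1|].
    apply exI0. apply ctx0.
  - apply II. apply AllI. simpl. eapply IE; [apply IHnnf|]. apply II.
    eapply IE; [apply ctx1|]. apply exI0, ctx0.
Qed.

End Logic.
Section GG.
Context {S : signature}.
Implicit Types (A B C : form S) (G : list (form S)).

Lemma neg_stable G A : prv false G (impl (neg (neg (neg A))) (neg A)).
Proof.
  apply II. apply II. eapply IE; [apply ctx1|]. apply II. eapply IE; [apply ctx0| apply ctx1].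
Qed.

Lemma gg_stable A : forall G, prv false G (impl (neg (neg (gg A))) (gg A)).
Proof.
  induction A; intros G; simpl.
  - apply II. eapply IE; [apply ctx0|]. apply II, ctx0.
  - apply neg_stable.
  - apply II. apply CI.
    + eapply IE; [apply IHA1|]. apply II. eapply IE; [apply ctx1|]. apply II.
      eapply IE; [apply ctx1| eapply CE1; apply ctx0].
    + eapply IE; [apply IHA2|]. apply II. eapply IE; [apply ctx1|]. apply II.
      eapply IE; [apply ctx1| eapply CE2; apply ctx0].
  - apply neg_stable.
  - apply II. apply II. eapply IE; [apply IHA2|]. apply II.
    eapply IE; [apply ctx2|]. apply II. eapply IE; [apply ctx1|].
    eapply IE; [apply ctx0| apply ctx2].
  - apply II. apply AllI. simpl. eapply IE; [apply IHA|]. apply II.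
    eapply IE; [apply ctx1|]. apply II. eapply IE; [apply ctx1|]. apply allE0, ctx0.
  - apply neg_stable.
Qed.

Lemma stab G A : prv false G (neg (neg (gg A))) -> prv false G (gg A).
Proof. intros H. eapply IE; [apply gg_stable| exact H]. Qed.

Lemma map_gg_shift G : map (subst_form shift) (map gg G) = map gg (map (subst_form shift) G).
Proof. rewrite !map_map. apply map_ext. intros a. symmetry. apply gg_subst. Qed.

Lemma gg_sound c G A : prv c G A -> prv false (map gg G) (gg A).
Proof.
  induction 1; simpl in *.
  - apply Ctx. apply in_map; auto.
  - apply II; auto.
  - eapply IE; eauto.
  - apply CI; auto.
  - eapply CE1; eauto.
  - eapply CE2; eauto.
  - apply II. eapply IE; [eapply CE1; apply ctx0| apply weak1; auto].
  - apply II. eapply IE; [eapply CE2; apply ctx0| apply weak1; auto].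
  - apply stab. apply II. eapply IE; [apply weak1; exact IHprv1|]. apply CI.
    + apply II. eapply IE; [apply ctx1|]. eapply weak; [exact IHprv2|].
      intros x [->|Hx]; [left; auto| right; right; auto].
    + apply II. eapply IE; [apply ctx1|]. eapply weak; [exact IHprv3|].
      intros x [->|Hx]; [left; auto| right; right; auto].
  - apply AllI. rewrite map_gg_shift. auto.
  - unfold inst in *. rewrite gg_subst. apply AllE. auto.
  - apply II. unfold inst in *. rewrite gg_subst in IHprv.
    apply (IE (A := subst_form (scons t var) (gg A))); [| apply weak1; auto].
    change (prv false (all (neg (gg A)) :: map gg G) (inst t (neg (gg A)))).
    apply AllE, ctx0.
  - apply stab. apply II. eapply IE; [apply weak1; exact IHprv1|]. apply AllI. simpl.
    apply II. eapply IE; [apply ctx1|]. rewrite map_gg_shift, <- gg_subst.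
    eapply weak; [exact IHprv2|]. intros x [->|Hx]; [left; auto| right; right; auto].
  - apply stab. exact IHprv.
Qed.

End GG.
Lemma to_classical {S : signature} (G : list (form S)) A : prv false G A -> prv true G A.
Proof.
  induction 1; try discriminate;
  first [ econstructor; eauto; fail | eapply IE; eauto; fail | eapply CE1; eauto; fail
        | eapply CE2; eauto; fail | eapply DE; eauto; fail | eapply ExE; eauto; fail | idtac].
all: try (apply AllE; auto).
Qed.

Lemma cut_ctx {S : signature} c (T : form S -> Prop) G : forall A, prv c G A ->
  (forall B, In B G -> tprv c T B) -> tprv c T A.
Proof.
  induction G as [|B G IH]; intros A H HT.
  - exists []. split; [intros ? []|]. exact H.
  - assert (H1 : tprv c T (impl B A)).
    { apply IH. apply II, H. intros; apply HT; right; auto. }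
    destruct H1 as [L1 [HL1 P1]]. destruct (HT B (or_introl eq_refl)) as [L2 [HL2 P2]].
    exists (L1 ++ L2). split.
    + intros x Hx. apply in_app_or in Hx as [|]; auto.
    + eapply IE; eapply weak; eauto; intros x Hx; apply in_or_app; auto.
Qed.

Lemma tprv_one {X Y : aform} : arith_axioms Y -> prv false [Y] X -> tprv false arith_axioms X.
Proof. intros HY H. exists [Y]. split; auto. intros B [<-|[]]; auto. Qed.

Lemma pr_eqn_atom {B} : pr_eqn B -> exists t u, B = aeq t u.
Proof. destruct 1; eexists; eexists; reflexivity. Qed.

Lemma leib_lemma (G : list aform) e X Z :
  prv false G (impl e (impl X (gg Z))) -> prv false G (impl (neg (neg e)) (impl X (gg Z))).
Proof.
  intros H. apply II, II, stab, II. eapply IE; [apply ctx2|]. apply II.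
  eapply IE; [apply ctx1|]. eapply IE; [eapply IE; [|apply ctx0]|apply ctx2].
  eapply weak; [exact H|]. intros x Hx; right; right; right; right; auto.
Qed.

Lemma ax_gg A : arith_axioms A -> tprv false arith_axioms (gg A).
Proof.
  intros [B [s [HB ->]]]. rewrite gg_subst.
  assert (Hax : arith_axioms (subst_form s B)) by (exists B, s; auto).
  destruct HB as [ | C | | | B HP | C].
  - apply (tprv_one Hax). simpl. apply II. eapply IE; [apply ctx0| apply ctx1].
  - apply (tprv_one (Y := subst_form s (impl (aeq (var 0) (var 1))
                   (impl (subst_form (sub_at 0) (gg C)) (subst_form (sub_at 1) (gg C)))))).
    { exists (impl (aeq (var 0) (var 1))
                   (impl (subst_form (sub_at 0) (gg C)) (subst_form (sub_at 1) (gg C)))), s.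
      split; [constructor| reflexivity]. }
    simpl. rewrite !gg_subst.
    rewrite <- (gg_subst C (sub_at 1)). rewrite <- (gg_subst (subst_form (sub_at 1) C) s).
    apply leib_lemma. apply ctx0.
  - apply (tprv_one Hax). simpl. apply II. eapply IE; [apply ctx0| apply ctx1].
  - apply (tprv_one Hax). simpl. apply II, II. eapply IE; [apply ctx1|]. apply II.
    eapply IE; [apply ctx1|]. eapply IE; [|apply ctx0]. apply Ctx. right; right; right; left; auto.
  - destruct (pr_eqn_atom HP) as [t [u ->]].
    apply (tprv_one Hax). simpl. apply II. eapply IE; [apply ctx0| apply ctx1].
  - apply (tprv_one (Y := subst_form s (gg (impl (inst zero C)
               (impl (all (impl C (subst_form (scons (succ (var 0)) shift) C))) (all C)))))).
    { eexists; exists s; split; [|reflexivity].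
      simpl. unfold inst. rewrite !gg_subst. exact (ax_ind (gg C)). }
    apply ctx0.
Qed.

Theorem theorem4 :
  (forall (S : signature) (phi : form S),
      nnf phi -> minimal_prv (impl (gg phi) (awk phi))) /\
  (forall phi : aform, nnf phi -> (PA_prv phi <-> HA'_prv (awk phi))).
Proof.
  split.
  - intros S phi H. apply part1. exact H.
  - intros phi H. split.
    + intros [G [HG P]]. apply gg_sound in P.
      destruct (cut_ctx false arith_axioms _ _ P) as [L [HL PL]].
      { intros B HB. apply in_map_iff in HB as [x [<- Hx]]. apply ax_gg; auto. }
      exists L. split; auto. eapply IE; [apply part1; auto| exact PL].
    + intros [L [HL PL]]. exists L. split; auto.
      eapply IE; [apply (contra (cl1 _ H))| apply to_classical; exact PL].
Qed.
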